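(* Let $N\ge 2$ and consider the slotted-ALOHA game among $N$ players in which player $i$ chooses $q_i\in(0,1)$ and has net utility $$V_i(\underline{q})=C\log\gamma_i(\underline{q})+A\,\alpha_i(\underline{q}_{-i})\,\overline{\gamma}_{-i}(\underline{q})-M q_i,$$ where $\gamma_i(\underline{q})=q_i\prod_{j\ne i}(1-q_j)$, $\alpha_i(\underline{q}_{-i})=\prod_{j\ne i}(1-q_j)$, $\overline{\gamma}_{-i}(\underline{q})=\frac{1}{N-1}\sum_{j\ne i}\gamma_j(\underline{q})$, and all players have the same parameters $C,M>0$, $A\ge 0$. Let $q^*\underline{1}$, $0<q^*<1$, be a symmetric Nash equilibrium of this game. If $$C>2(N-1)A,$$ then $q^*\underline{1}$ is a locally asymptotically stable equilibrium of the continuous-time dynamics $$\dot q_i(t)=\frac{\partial V_i}{\partial q_i}(\underline{q}(t)),\qquad i=1,\dots,N.$$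
   Context: $\underline{q}=(q_1,\dots,q_N)$ is the profile of access probabilities and $\underline{q}_{-i}$ the profile of players other than $i$; $\underline{1}$ is the all-ones vector in $\mathbb{R}^N$. A Nash equilibrium is a profile $\underline{q}^*$ such that for each $i$, $q_i^*$ maximizes $V_i(q_i;\underline{q}^*_{-i})$ over $q_i$; it is symmetric if all coordinates are equal. *)

(* Defs.v *)
From Stdlib Require Import Reals Lra.
From Coquelicot Require Import Coquelicot.
Open Scope R_scope.

(* Profiles q are functions nat -> R; only the coordinates 0..N-1 matter
   (players are indexed 0..N-1). *)

Fixpoint prod_upto (n : nat) (f : nat -> R) : R :=
  match n with O => 1 | S n' => prod_upto n' f * f n' end.

Fixpoint sum_upto (n : nat) (f : nat -> R) : R :=
  match n with O => 0 | S n' => sum_upto n' f + f n' end.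

Definition alpha (N : nat) (q : nat -> R) (i : nat) : R :=
  prod_upto N (fun j => if Nat.eqb j i then 1 else 1 - q j).

Definition gamma (N : nat) (q : nat -> R) (i : nat) : R :=
  q i * alpha N q i.

Definition gammabar (N : nat) (q : nat -> R) (i : nat) : R :=
  / (INR N - 1) * sum_upto N (fun j => if Nat.eqb j i then 0 else gamma N q j).

Definition V (N : nat) (C A M : R) (q : nat -> R) (i : nat) : R :=
  C * ln (gamma N q i) + A * alpha N q i * gammabar N q i - M * q i.

Definition upd (q : nat -> R) (i : nat) (x : R) : nat -> R :=
  fun j => if Nat.eqb j i then x else q j.

Definition field (N : nat) (C A M : R) (q : nat -> R) (i : nat) : R :=
  Derive (fun x => V N C A M (upd q i x) i) (q i).

Definition in_box (N : nat) (q : nat -> R) : Prop :=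
  forall i, (i < N)%nat -> 0 < q i < 1.

Definition sym_profile (c : R) : nat -> R := fun _ => c.

Definition is_Nash (N : nat) (C A M : R) (q : nat -> R) : Prop :=
  in_box N q /\
  forall i, (i < N)%nat -> forall x, 0 < x < 1 ->
    V N C A M (upd q i x) i <= V N C A M q i.

Definition near_lt (N : nat) (x y : nat -> R) (e : R) : Prop :=
  forall i, (i < N)%nat -> Rabs (x i - y i) < e.

Definition is_solution (N : nat) (F : (nat -> R) -> nat -> R)
    (x : R -> nat -> R) (T : Rbar) : Prop :=
  (forall t, 0 <= t -> Rbar_lt t T -> in_box N (x t)) /\
  forall i, (i < N)%nat ->
    filterlim (fun s => x s i) (at_right 0) (locally (x 0 i)) /\
    (forall t, 0 < t -> Rbar_lt t T -> is_derive (fun s => x s i) t (F (x t) i)).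

(* Lyapunov stability (including existence of global solutions from nearby
   initial data) *)
Definition lyap_stable (N : nat) (F : (nat -> R) -> nat -> R)
    (qe : nat -> R) : Prop :=
  forall eps, 0 < eps -> exists delta, 0 < delta /\
    (forall x0, near_lt N x0 qe delta ->
       exists x, is_solution N F x p_infty /\
                 forall i, (i < N)%nat -> x 0 i = x0 i) /\
    (forall (T : Rbar) x, is_solution N F x T -> near_lt N (x 0) qe delta ->
       forall t, 0 <= t -> Rbar_lt t T -> near_lt N (x t) qe eps).

Definition loc_attractive (N : nat) (F : (nat -> R) -> nat -> R)
    (qe : nat -> R) : Prop :=
  exists delta, 0 < delta /\
    forall x, is_solution N F x p_infty -> near_lt N (x 0) qe delta ->
      forall i, (i < N)%nat -> is_lim (fun t => x t i) p_infty (qe i).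

Definition loc_asympt_stable (N : nat) (F : (nat -> R) -> nat -> R)
    (qe : nat -> R) : Prop :=
  lyap_stable N F qe /\ loc_attractive N F qe.

(* Main.v *)
Require Import Defs.
From Stdlib Require Import Reals Lra Lia FunctionalExtensionality.
From Coquelicot Require Import Coquelicot.
Open Scope R_scope.

Lemma prod_ext n f g : (forall k, (k < n)%nat -> f k = g k) -> prod_upto n f = prod_upto n g.
Proof. induction n; intros H; simpl; auto. rewrite IHn by (intros; apply H; lia). rewrite H by lia; auto. Qed.

Lemma su_ext n f g : (forall k, (k < n)%nat -> f k = g k) -> sum_upto n f = sum_upto n g.
Proof. induction n; intros H; simpl; auto. rewrite IHn by (intros; apply H; lia). rewrite H by lia; auto. Qed.

Lemma su_scal n c f : sum_upto n (fun k => c * f k) = c * sum_upto n f.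
Proof. induction n; simpl; [ring|]. rewrite IHn; ring. Qed.

Lemma su_plus n f g : sum_upto n (fun k => f k + g k) = sum_upto n f + sum_upto n g.
Proof. induction n; simpl; [ring|]. rewrite IHn; ring. Qed.

Lemma su_le n f g : (forall k, (k < n)%nat -> f k <= g k) -> sum_upto n f <= sum_upto n g.
Proof. induction n; intros H; simpl; [lra|]. assert (f n <= g n) by (apply H; lia).
 assert (sum_upto n f <= sum_upto n g) by (apply IHn; intros; apply H; lia). lra. Qed.

Lemma su_nonneg n f : (forall k, (k < n)%nat -> 0 <= f k) -> 0 <= sum_upto n f.
Proof. intros H. replace 0 with (sum_upto n (fun _ => 0)). apply su_le; auto.
 clear H; induction n; simpl; auto; rewrite IHn; ring. Qed.

Lemma su_const n c : sum_upto n (fun _ => c) = INR n * c.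
Proof. induction n; [simpl; ring|]. cbn [sum_upto]. rewrite IHn, S_INR; ring. Qed.

Lemma su_abs n f : Rabs (sum_upto n f) <= sum_upto n (fun k => Rabs (f k)).
Proof. induction n; simpl. rewrite Rabs_R0; lra.
 eapply Rle_trans; [apply Rabs_triang|]. lra. Qed.

Lemma su_minus n f g : sum_upto n (fun k => f k - g k) = sum_upto n f - sum_upto n g.
Proof. induction n; simpl; [ring|]. rewrite IHn; ring. Qed.

Lemma su_skip n i f : (i < n)%nat ->
  sum_upto n (fun k => if Nat.eqb k i then 0 else f k) = sum_upto n f - f i.
Proof. induction n; intros Hi; [lia|]. simpl.
 destruct (Nat.eqb_spec n i).
 - subst. rewrite (su_ext i _ f). ring. intros k Hk. destruct (Nat.eqb_spec k i); [lia|auto].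
 - rewrite IHn by lia. ring. Qed.

Lemma prod_split n m f : (m < n)%nat ->
  prod_upto n f = f m * prod_upto n (fun k => if Nat.eqb k m then 1 else f k).
Proof. induction n; intros Hm; [lia|]. simpl.
 destruct (Nat.eqb_spec n m).
 - subst. rewrite (prod_ext m (fun k => if Nat.eqb k m then 1 else f k) f). ring.
   intros k Hk. destruct (Nat.eqb_spec k m); [lia|auto].
 - rewrite IHn by lia. ring. Qed.

Lemma prod_nonneg01 n f : (forall k, (k<n)%nat -> 0 <= f k <= 1) -> 0 <= prod_upto n f <= 1.
Proof. induction n; intros H; simpl; [lra|].
 destruct IHn as [H1 H2]; [intros; apply H; lia|]. destruct (H n) as [H3 H4]; [lia|].
 split; [apply Rmult_le_pos; auto|]. replace 1 with (1*1) by ring.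
 apply Rmult_le_compat; auto. Qed.

Lemma prod_pos n f : (forall k, (k<n)%nat -> 0 < f k) -> 0 < prod_upto n f.
Proof. induction n; intros H; simpl; [lra|]. apply Rmult_lt_0_compat; [apply IHn; intros; apply H; lia| apply H; lia]. Qed.

Lemma prod_lip n f g : (forall k, (k<n)%nat -> 0 <= f k <= 1) -> (forall k, (k<n)%nat -> 0 <= g k <= 1) ->
  Rabs (prod_upto n f - prod_upto n g) <= sum_upto n (fun k => Rabs (f k - g k)).
Proof. induction n; intros Hf Hg; simpl. rewrite Rminus_diag, Rabs_R0; lra.
 assert (IH := IHn (fun k Hk => Hf k ltac:(lia)) (fun k Hk => Hg k ltac:(lia))).
 destruct (prod_nonneg01 n f) as [P1 P2]; [intros; apply Hf; lia|].
 destruct (prod_nonneg01 n g) as [Q1 Q2]; [intros; apply Hg; lia|].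
 destruct (Hf n) as [F1 F2]; [lia|]. destruct (Hg n) as [G1 G2]; [lia|].
 replace (prod_upto n f * f n - prod_upto n g * g n) with
   ((prod_upto n f - prod_upto n g) * f n + prod_upto n g * (f n - g n)) by ring.
 eapply Rle_trans; [apply Rabs_triang|]. rewrite !Rabs_mult.
 rewrite (Rabs_right (f n)), (Rabs_right (prod_upto n g)) by lra.
 assert (Rabs (prod_upto n f - prod_upto n g) * f n <= Rabs (prod_upto n f - prod_upto n g)).
 { rewrite <- (Rmult_1_r (Rabs (_ - _))) at 2. apply Rmult_le_compat_l; [apply Rabs_pos|lra]. }
 assert (prod_upto n g * Rabs (f n - g n) <= Rabs (f n - g n)).
 { rewrite <- (Rmult_1_l (Rabs (f n - g n))) at 2. apply Rmult_le_compat_r; [apply Rabs_pos|lra]. }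
 lra. Qed.

Definition beta (N : nat) (q : nat -> R) (i j : nat) : R :=
  prod_upto N (fun k => if Nat.eqb k i then 1 else if Nat.eqb k j then q k else 1 - q k).
Definition Dd (N : nat) (q : nat -> R) (i : nat) : R :=
  sum_upto N (fun j => if Nat.eqb j i then 0 else alpha N q i * beta N q i j).
Definition Fexp (N : nat) (C A M : R) (q : nat -> R) (i : nat) : R :=
  C / q i - M - A / (INR N - 1) * Dd N q i.

Lemma upd_eq q i x : upd q i x i = x.
Proof. unfold upd; rewrite Nat.eqb_refl; auto. Qed.
Lemma upd_neq q i x k : k <> i -> upd q i x k = q k.
Proof. intros H; unfold upd; destruct (Nat.eqb_spec k i); auto; lia. Qed.

Lemma alpha_upd N q i x : alpha N (upd q i x) i = alpha N q i.
Proof. unfold alpha. apply prod_ext. intros k _. destruct (Nat.eqb_spec k i); auto.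
 rewrite upd_neq; auto. Qed.

Lemma gamma_upd N q i x j : (i < N)%nat -> (j < N)%nat -> j <> i ->
  gamma N (upd q i x) j = (1 - x) * beta N q i j.
Proof. intros Hi Hj Hij. unfold gamma, alpha, beta.
 rewrite upd_neq by auto.
 set (R0 := fun k => if Nat.eqb k i then 1 else if Nat.eqb k j then 1 else 1 - q k).
 assert (E1 : prod_upto N (fun k => if Nat.eqb k j then 1 else 1 - upd q i x k) = (1 - x) * prod_upto N R0).
 { rewrite (prod_split N i) by auto. destruct (Nat.eqb_spec i j); [lia|]. rewrite upd_eq. f_equal.
   apply prod_ext. intros k _. unfold R0. destruct (Nat.eqb_spec k i), (Nat.eqb_spec k j); auto.
   rewrite upd_neq; auto. }
 assert (E2 : prod_upto N (fun k => if Nat.eqb k i then 1 else if Nat.eqb k j then q k else 1 - q k) = q j * prod_upto N R0).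
 { rewrite (prod_split N j) by auto. destruct (Nat.eqb_spec j i); [lia|]. rewrite Nat.eqb_refl. f_equal.
   apply prod_ext. intros k _. unfold R0. destruct (Nat.eqb_spec k i), (Nat.eqb_spec k j); auto. }
 rewrite E1, E2. ring. Qed.

Lemma V_upd N C A M q i x : (i < N)%nat ->
  V N C A M (upd q i x) i = C * ln (x * alpha N q i) +
     A * alpha N q i * (/ (INR N - 1) * ((1 - x) * sum_upto N (fun j => if Nat.eqb j i then 0 else beta N q i j)))
     - M * x.
Proof. intros Hi. unfold V, gammabar. unfold gamma at 1. rewrite upd_eq, alpha_upd.
 f_equal. f_equal. f_equal. f_equal.
 rewrite <- su_scal. apply su_ext. intros k Hk. destruct (Nat.eqb_spec k i). ring.
 apply gamma_upd; auto. Qed.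

Lemma field_eq N C A M q i : in_box N q -> (i < N)%nat ->
  field N C A M q i = Fexp N C A M q i.
Proof. intros Hb Hi. unfold field.
 set (a := alpha N q i). set (P := sum_upto N (fun j => if Nat.eqb j i then 0 else beta N q i j)).
 rewrite (Derive_ext _ (fun x => C * ln (x * a) + A * a * (/ (INR N - 1) * ((1 - x) * P)) - M * x))
   by (intros; apply V_upd; auto).
 assert (Ha : 0 < a). { unfold a, alpha. apply prod_pos. intros k Hk. destruct (Nat.eqb k i); [lra|].
   destruct (Hb k Hk); lra. }
 destruct (Hb i Hi) as [H1 H2].
 assert (HD : Dd N q i = a * P). { unfold Dd, P. rewrite <- su_scal. apply su_ext. intros k _.
   destruct (Nat.eqb k i); fold a; ring. }
 unfold Fexp. rewrite HD.
 apply is_derive_unique. auto_derive. apply Rmult_lt_0_compat; auto.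
 assert (E : a * / (q i * a) = / q i) by (field; lra).
 rewrite Rmult_1_l, E. unfold Rdiv. ring. Qed.

Definition Sk (N : nat) (p p' : nat -> R) (i : nat) : R :=
  sum_upto N (fun k => if Nat.eqb k i then 0 else Rabs (p k - p' k)).

Definition in01 (N : nat) (p : nat -> R) := forall k, (k < N)%nat -> 0 <= p k <= 1.

Lemma mul_lip a a' b b' : 0 <= a <= 1 -> 0 <= a' <= 1 -> 0 <= b <= 1 -> 0 <= b' <= 1 ->
  Rabs (a * b - a' * b') <= Rabs (a - a') + Rabs (b - b').
Proof. intros. replace (a*b - a'*b') with ((a - a') * b + a' * (b - b')) by ring.
 eapply Rle_trans; [apply Rabs_triang|]. rewrite !Rabs_mult.
 rewrite (Rabs_right b), (Rabs_right a') by lra.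
 assert (Rabs (a - a') * b <= Rabs (a - a')).
 { rewrite <- (Rmult_1_r (Rabs (_ - _))) at 2. apply Rmult_le_compat_l; [apply Rabs_pos|lra]. }
 assert (a' * Rabs (b - b') <= Rabs (b - b')).
 { rewrite <- (Rmult_1_l (Rabs (b - b'))) at 2. apply Rmult_le_compat_r; [apply Rabs_pos|lra]. }
 lra. Qed.

Lemma alpha01 N p i : in01 N p -> 0 <= alpha N p i <= 1.
Proof. intros H. apply prod_nonneg01. intros k Hk. destruct (Nat.eqb k i); [lra|]. destruct (H k Hk); lra. Qed.
Lemma beta01 N p i j : in01 N p -> 0 <= beta N p i j <= 1.
Proof. intros H. apply prod_nonneg01. intros k Hk. destruct (Nat.eqb k i); [lra|].
 destruct (Nat.eqb k j); destruct (H k Hk); lra. Qed.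

Lemma alpha_lip N p p' i : in01 N p -> in01 N p' ->
  Rabs (alpha N p i - alpha N p' i) <= Sk N p p' i.
Proof. intros H H'. unfold alpha. eapply Rle_trans; [apply prod_lip|].
 - intros k Hk. destruct (Nat.eqb k i); [lra|]. destruct (H k Hk); lra.
 - intros k Hk. destruct (Nat.eqb k i); [lra|]. destruct (H' k Hk); lra.
 - apply Req_le, su_ext. intros k _. destruct (Nat.eqb k i). rewrite Rminus_diag, Rabs_R0; auto.
   rewrite <- Rabs_Ropp. f_equal. ring. Qed.

Lemma beta_lip N p p' i j : in01 N p -> in01 N p' ->
  Rabs (beta N p i j - beta N p' i j) <= Sk N p p' i.
Proof. intros H H'. unfold beta. eapply Rle_trans; [apply prod_lip|].
 - intros k Hk. destruct (Nat.eqb k i); [lra|]. destruct (Nat.eqb k j); destruct (H k Hk); lra.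
 - intros k Hk. destruct (Nat.eqb k i); [lra|]. destruct (Nat.eqb k j); destruct (H' k Hk); lra.
 - apply Req_le, su_ext. intros k _. destruct (Nat.eqb k i). rewrite Rminus_diag, Rabs_R0; auto.
   destruct (Nat.eqb k j); auto. rewrite <- Rabs_Ropp. f_equal. ring. Qed.

Lemma su_skip_const N i c : (i < N)%nat ->
  sum_upto N (fun k => if Nat.eqb k i then 0 else c) = (INR N - 1) * c.
Proof. intros Hi. rewrite su_skip by auto. rewrite su_const. ring. Qed.

Lemma Dd_lip N p p' i : (i < N)%nat -> in01 N p -> in01 N p' ->
  Rabs (Dd N p i - Dd N p' i) <= 2 * (INR N - 1) * Sk N p p' i.
Proof. intros Hi H H'. unfold Dd. rewrite <- su_minus. eapply Rle_trans; [apply su_abs|].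
 eapply Rle_trans. apply (su_le _ _ (fun k => if Nat.eqb k i then 0 else 2 * Sk N p p' i)).
 - intros k Hk. destruct (Nat.eqb k i). rewrite Rminus_diag, Rabs_R0; lra.
   eapply Rle_trans; [apply mul_lip; try apply alpha01; try apply beta01; auto|].
   pose proof (alpha_lip N p p' i H H'). pose proof (beta_lip N p p' i k H H'). lra.
 - rewrite su_skip_const by auto. lra. Qed.

Lemma double_sum N (e : nat -> R) :
  sum_upto N (fun i => Rabs (e i) * sum_upto N (fun k => if Nat.eqb k i then 0 else Rabs (e k)))
  <= (INR N - 1) * sum_upto N (fun i => e i ^ 2).
Proof.
 set (E := sum_upto N (fun i => e i ^ 2)).
 eapply Rle_trans. apply (su_le _ _ (fun i => sum_upto N (fun k => if Nat.eqb k i then 0 else (e i ^ 2 + e k ^ 2) / 2))).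
 - intros i Hi. rewrite <- su_scal. apply su_le. intros k Hk. destruct (Nat.eqb k i). lra.
   rewrite <- (pow2_abs (e i)), <- (pow2_abs (e k)).
   assert (0 <= (Rabs (e i) - Rabs (e k))^2) by apply pow2_ge_0. nra.
 - rewrite (su_ext N _ (fun i => (INR N - 1) * (e i ^ 2 / 2) + (E - e i ^ 2) / 2)).
   + rewrite su_plus, su_scal. rewrite (su_ext N (fun i => (E - e i ^ 2) / 2) (fun i => / 2 * (E - e i ^ 2))) by (intros; unfold Rdiv; ring).
     rewrite su_scal, su_minus, su_const.
     rewrite (su_ext N (fun i => e i ^ 2 / 2) (fun i => /2 * e i ^ 2)) by (intros; unfold Rdiv; ring).
     rewrite su_scal. fold E. match goal with |- ?a <= ?b => assert (a = b) by field; lra end.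
   + intros i Hi.
     rewrite (su_ext N _ (fun k => (if Nat.eqb k i then 0 else e i ^ 2 / 2) + (if Nat.eqb k i then 0 else / 2 * e k ^ 2))).
     rewrite su_plus, su_skip_const, su_skip, su_scal by auto. fold E. field.
     intros k _. destruct (Nat.eqb k i); field. Qed.

Lemma box_sym N qs : 0 < qs < 1 -> in_box N (sym_profile qs).
Proof. intros H k _. unfold sym_profile; auto. Qed.

Lemma Nash_zero N C A M qs i : 0 < qs < 1 -> (i < N)%nat ->
  is_Nash N C A M (sym_profile qs) -> Fexp N C A M (sym_profile qs) i = 0.
Proof. intros Hq Hi [_ HN].
 rewrite <- field_eq by (auto; apply box_sym; auto).
 set (f := fun x => V N C A M (upd (sym_profile qs) i x) i).
 assert (Hf : sym_profile qs = upd (sym_profile qs) i qs).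
 { apply functional_extensionality. intros k. unfold upd, sym_profile. destruct (Nat.eqb k i); auto. }
 assert (Hex : ex_derive f qs).
 { unfold f. eexists. eapply is_derive_ext. intros t. symmetry. apply V_upd; auto.
   auto_derive. apply Rmult_lt_0_compat; [lra|]. apply prod_pos. intros k Hk. unfold sym_profile. destruct (Nat.eqb k i); lra. reflexivity. }
 unfold field. fold f. change (sym_profile qs i) with qs.
 rewrite <- (Derive_Reals f qs (ex_derive_Reals_0 _ _ Hex)).
 apply (deriv_maximum f 0 1 qs); try lra.
 intros x H1 H2. unfold f. rewrite <- Hf. apply HN; auto. Qed.

Lemma coord_bound N C A M qs p i : (2 <= N)%nat -> 0 < C -> 0 <= A -> 0 < qs < 1 -> (i < N)%nat ->
  is_Nash N C A M (sym_profile qs) -> in_box N p ->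
  (p i - qs) * Fexp N C A M p i <=
    - (C / qs) * (p i - qs) ^ 2 + 2 * A * Rabs (p i - qs) * Sk N p (sym_profile qs) i.
Proof. intros HN HC HA Hq Hi Hnash Hp.
 assert (Z := Nash_zero N C A M qs i Hq Hi Hnash).
 assert (HN1 : 1 <= INR N - 1). { apply le_INR in HN. simpl in HN. lra. }
 assert (in01 N p) by (intros k Hk; destruct (Hp k Hk); lra).
 assert (in01 N (sym_profile qs)) by (intros k Hk; unfold sym_profile; lra).
 assert (HL := Dd_lip N p (sym_profile qs) i Hi H H0).
 destruct (Hp i Hi) as [P1 P2].
 replace (Fexp N C A M p i) with (Fexp N C A M p i - Fexp N C A M (sym_profile qs) i) by lra.
 unfold Fexp. change (sym_profile qs i) with qs.
 replace ((p i - qs) * (C / p i - M - A / (INR N - 1) * Dd N p i - (C / qs - M - A / (INR N - 1) * Dd N (sym_profile qs) i)))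
   with (- (C / (p i * qs)) * (p i - qs) ^ 2 - A / (INR N - 1) * ((p i - qs) * (Dd N p i - Dd N (sym_profile qs) i))) by (field; lra).
 set (d := Dd N p i - Dd N (sym_profile qs) i) in *. set (e := p i - qs) in *.
 assert (T1 : - (C / (p i * qs)) * e ^ 2 <= - (C / qs) * e ^ 2).
 { assert (C / qs <= C / (p i * qs)).
   { unfold Rdiv. apply Rmult_le_compat_l; [lra|]. apply Rinv_le_contravar; nra. }
   assert (0 <= e^2) by apply pow2_ge_0. nra. }
 assert (T2 : - (A / (INR N - 1) * (e * d)) <= 2 * A * Rabs e * Sk N p (sym_profile qs) i).
 { assert (- (e * d) <= Rabs e * Rabs d).
   { rewrite <- Rabs_mult. rewrite <- Rabs_Ropp. apply Rle_abs. }
   assert (0 <= A / (INR N - 1)) by (apply Rdiv_le_0_compat; lra).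
   assert (- (A / (INR N - 1) * (e * d)) <= A / (INR N - 1) * (Rabs e * Rabs d)) by nra.
   assert (Rabs e * Rabs d <= Rabs e * (2 * (INR N - 1) * Sk N p (sym_profile qs) i)).
   { apply Rmult_le_compat_l; [apply Rabs_pos|auto]. }
   assert (A / (INR N - 1) * (Rabs e * Rabs d) <= A / (INR N - 1) * (Rabs e * (2 * (INR N - 1) * Sk N p (sym_profile qs) i))).
   { apply Rmult_le_compat_l; auto. }
   replace (A / (INR N - 1) * (Rabs e * (2 * (INR N - 1) * Sk N p (sym_profile qs) i))) with
     (2 * A * Rabs e * Sk N p (sym_profile qs) i) in H5 by (field; lra). lra. }
 lra. Qed.

Lemma total_bound N C A M qs p : (2 <= N)%nat -> 0 < C -> 0 <= A -> 0 < qs < 1 ->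
  is_Nash N C A M (sym_profile qs) -> in_box N p ->
  sum_upto N (fun i => (p i - qs) * Fexp N C A M p i) <=
    - (C / qs - 2 * A * (INR N - 1)) * sum_upto N (fun i => (p i - qs) ^ 2).
Proof. intros HN HC HA Hq Hnash Hp.
 eapply Rle_trans. apply (su_le _ _ (fun i => - (C / qs) * (p i - qs) ^ 2 + 2 * A * (Rabs (p i - qs) * Sk N p (sym_profile qs) i))).
 { intros i Hi. rewrite <- Rmult_assoc. apply coord_bound; auto. }
 rewrite su_plus, !su_scal.
 assert (D := double_sum N (fun k => p k - qs)). unfold Sk, sym_profile.
 cbv beta in D. match type of D with ?a <= ?b => assert (2 * A * a <= 2 * A * b) by (apply Rmult_le_compat_l; lra) end.
 lra. Qed.

Lemma ballR (x y e : R) : ball x e y <-> Rabs (y - x) < e.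
Proof. reflexivity. Qed.

Lemma lip_cont f K t : 0 <= K -> (forall a b, Rabs (f a - f b) <= K * Rabs (a - b)) -> continuous f t.
Proof. intros HK H. apply filterlim_locally. intros eps.
 assert (Hd : 0 < eps / (K + 1)) by (apply Rdiv_lt_0_compat; [apply cond_pos|lra]).
 exists (mkposreal _ Hd). intros y Hy. change (Rabs (y - t) < eps / (K + 1)) in Hy. apply ballR.
 eapply Rle_lt_trans; [apply H|].
 assert (K * Rabs (y - t) <= K * (eps / (K + 1))) by (apply Rmult_le_compat_l; lra).
 assert (K * (eps / (K + 1)) < eps).
 { assert (E : K * (eps / (K + 1)) = eps - eps / (K + 1)) by (field; lra). lra. }
 lra. Qed.

Lemma exR (g : R -> R) a b : (forall s, continuous g s) -> ex_RInt g a b.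
Proof. intros H. apply (@ex_RInt_continuous R_CompleteNormedModule). intros; apply H. Qed.

Lemma chasR (g : R -> R) a b c : (forall s, continuous g s) -> RInt g a b + RInt g b c = RInt g a c.
Proof. intros H. apply (RInt_Chasles g a b c); apply exR; auto. Qed.

Lemma RInt_abs_const (g : R -> R) Bd a b : (forall s, continuous g s) -> (forall s, Rabs (g s) <= Bd) ->
  Rabs (RInt g a b) <= Bd * Rabs (b - a).
Proof. intros Hc Hb. destruct (Rle_dec a b).
 - rewrite (Rabs_right (b - a)) by lra. rewrite Rmult_comm. apply abs_RInt_le_const; auto. apply exR; auto.
 - assert (E := chasR g a b a Hc). rewrite RInt_point in E. assert (E2 : RInt g a b + RInt g b a = 0) by (rewrite E; reflexivity).
   replace (RInt g a b) with (- RInt g b a) by lra. rewrite Rabs_Ropp, (Rabs_left (b - a)) by lra.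
   replace (- (b - a)) with (a - b) by ring. rewrite Rmult_comm. apply abs_RInt_le_const; [lra| |auto]. apply exR; auto. Qed.

Lemma RInt_minusR (f g : R -> R) a b : (forall s, continuous f s) -> (forall s, continuous g s) ->
  RInt (fun s => f s - g s) a b = RInt f a b - RInt g a b.
Proof. intros Hf Hg. apply (RInt_minus f g); apply exR; auto. Qed.

Lemma RInt_deriv_bound (h P p : R -> R) t : 0 <= t -> (forall s, continuous h s) -> (forall s, continuous p s) ->
  (forall s, is_derive P s (p s)) -> (forall s, 0 <= s <= t -> Rabs (h s) <= p s) ->
  Rabs (RInt h 0 t) <= P t - P 0.
Proof. intros Ht Hh Hp HP Hb.
 eapply Rle_trans. apply abs_RInt_le; auto. apply exR; auto.
 eapply Rle_trans. apply (RInt_le (fun s => Rabs (h s)) p); auto.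
 - apply exR. intros s. apply continuous_Rabs_comp. auto.
 - apply exR. auto.
 - intros x Hx. apply Hb. lra.
 - apply Req_le. apply is_RInt_unique. apply (is_RInt_derive P p 0 t); intros; auto. Qed.

Fixpoint pit (G : (nat -> R) -> nat -> R) (x0 : nat -> R) (k : nat) (t : R) (i : nat) : R :=
  match k with O => x0 i | S k' => x0 i + RInt (fun s => G (pit G x0 k' s) i) 0 t end.

Definition GB N (G : (nat -> R) -> nat -> R) Bd := forall q i, (i < N)%nat -> Rabs (G q i) <= Bd.
Definition GL N (G : (nat -> R) -> nat -> R) L := forall q p i, (i < N)%nat ->
  Rabs (G q i - G p i) <= L * sum_upto N (fun k => Rabs (q k - p k)).

Lemma comp_lip N G L K (y : R -> nat -> R) i : 0 <= L -> GL N G L -> (i < N)%nat ->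
  (forall j, (j < N)%nat -> forall a b, Rabs (y a j - y b j) <= K * Rabs (a - b)) ->
  forall a b, Rabs (G (y a) i - G (y b) i) <= (L * (INR N * K)) * Rabs (a - b).
Proof. intros HL HG Hi Hy a b. eapply Rle_trans; [apply HG; auto|].
 assert (sum_upto N (fun k => Rabs (y a k - y b k)) <= sum_upto N (fun _ => K * Rabs (a - b))).
 { apply su_le; auto. }
 rewrite su_const in H. replace (L * (INR N * K) * Rabs (a - b)) with (L * (INR N * K * Rabs (a - b))) by ring.
 apply Rmult_le_compat_l; lra. Qed.

Lemma pit_lip N G Bd L x0 : 0 <= Bd -> 0 <= L -> GB N G Bd -> GL N G L ->
  forall k i, (i < N)%nat -> forall a b, Rabs (pit G x0 k a i - pit G x0 k b i) <= Bd * Rabs (a - b).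
Proof. intros HBd HL HB HG k. induction k; intros i Hi a b; simpl.
 - rewrite Rminus_diag, Rabs_R0. apply Rmult_le_pos; auto; apply Rabs_pos.
 - set (g := fun s : R => G (pit G x0 k s) i).
   assert (Hc : forall s, continuous g s).
   { intros s. apply (lip_cont _ (L * (INR N * Bd))). apply Rmult_le_pos; auto. apply Rmult_le_pos; auto. apply pos_INR.
     apply comp_lip; auto. }
   pose proof (chasR g 0 b a Hc).
   replace (x0 i + RInt g 0 a - (x0 i + RInt g 0 b)) with (RInt g b a) by lra.
   apply RInt_abs_const; auto. intros s; apply HB; auto. Qed.

Definition cst N Bd L k := Bd * (INR N * L) ^ k / INR (Factorial.fact (S k)).
Definition bb N Bd L k t := cst N Bd L k * t ^ (S k).

Lemma bb_deriv N Bd L k s : is_derive (bb N Bd L (S k)) s (INR N * L * bb N Bd L k s).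
Proof. unfold bb. replace (INR N * L * (cst N Bd L k * s ^ S k)) with
   (cst N Bd L (S k) * (INR (S (S k)) * s ^ Init.Nat.pred (S (S k)))).
 - apply is_derive_scal. apply is_derive_Reals. apply derivable_pt_lim_pow.
 - unfold cst. simpl Init.Nat.pred. rewrite (fact_simpl (S k)), mult_INR.
   assert (INR (Factorial.fact (S k)) <> 0) by apply INR_fact_neq_0.
   assert (INR (S (S k)) <> 0) by (apply not_0_INR; lia).
   simpl pow. field. auto. Qed.

Lemma bb_cont N Bd L k s : continuous (bb N Bd L k) s.
Proof. apply (@ex_derive_continuous R_AbsRing R_NormedModule). unfold bb. auto_derive. auto. Qed.

Lemma bb0 N Bd L k : bb N Bd L k 0 = 0.
Proof. unfold bb. simpl. ring. Qed.

Lemma pit_gcont N G Bd L x0 k i : 0 <= Bd -> 0 <= L -> GB N G Bd -> GL N G L -> (i < N)%nat ->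
  forall s, continuous (fun s : R => G (pit G x0 k s) i) s.
Proof. intros HBd HL HB HG Hi s. apply (lip_cont _ (L * (INR N * Bd))).
 apply Rmult_le_pos; auto. apply Rmult_le_pos; auto. apply pos_INR.
 apply comp_lip; auto. intros j Hj. apply (pit_lip N G Bd L); auto. Qed.

Lemma pit_bound N G Bd L x0 : 0 <= Bd -> 0 <= L -> GB N G Bd -> GL N G L ->
  forall k t i, 0 <= t -> (i < N)%nat -> Rabs (pit G x0 (S k) t i - pit G x0 k t i) <= bb N Bd L k t.
Proof. intros HBd HL HB HG k. induction k; intros t i Ht Hi.
 - simpl pit. assert (Eab : forall a b : R, a + b - a = b) by (intros; ring). rewrite Eab.
   eapply Rle_trans. apply (RInt_abs_const _ Bd). intros; apply continuous_const. intros; apply HB; auto.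
   unfold bb, cst. simpl. rewrite Rabs_right by lra. lra.
 - set (g1 := fun s : R => G (pit G x0 (S k) s) i). set (g0 := fun s : R => G (pit G x0 k s) i).
   assert (C1 : forall s, continuous g1 s) by (apply (pit_gcont N G Bd L); auto).
   assert (C0 : forall s, continuous g0 s) by (apply (pit_gcont N G Bd L); auto).
   replace (pit G x0 (S (S k)) t i - pit G x0 (S k) t i) with (RInt (fun s => g1 s - g0 s) 0 t).
   2:{ rewrite RInt_minusR by auto. change (pit G x0 (S (S k)) t i) with (x0 i + RInt g1 0 t). change (pit G x0 (S k) t i) with (x0 i + RInt g0 0 t). assert (Eab2 : forall a b c : R, b - c = a + b - (a + c)) by (intros; ring). apply Eab2. }
   replace (bb N Bd L (S k) t) with (bb N Bd L (S k) t - bb N Bd L (S k) 0) by (rewrite bb0; ring).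
   apply (RInt_deriv_bound _ _ (fun s => INR N * L * bb N Bd L k s)); auto.
   + intros s. apply (@continuous_minus _ R_AbsRing R_NormedModule g1 g0); auto.
   + intros s. apply (@continuous_mult _ R_AbsRing (fun _ => INR N * L) (bb N Bd L k)). apply continuous_const. apply bb_cont.
   + intros s. apply bb_deriv.
   + intros s Hs. unfold g1, g0. eapply Rle_trans. apply HG; auto.
     assert (sum_upto N (fun k0 => Rabs (pit G x0 (S k) s k0 - pit G x0 k s k0)) <= sum_upto N (fun _ => bb N Bd L k s)).
     { apply su_le. intros j Hj. apply IHk; auto. lra. }
     rewrite su_const in H. replace (INR N * L * bb N Bd L k s) with (L * (INR N * bb N Bd L k s)) by ring.
     apply Rmult_le_compat_l; auto. Qed.

Lemma bb_nonneg N Bd L k t : 0 <= Bd -> 0 <= L -> 0 <= t -> 0 <= bb N Bd L k t.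
Proof. intros. unfold bb, cst. apply Rmult_le_pos; [|apply pow_le; auto].
 apply Rmult_le_pos. apply Rmult_le_pos; auto. apply pow_le. apply Rmult_le_pos; auto; apply pos_INR.
 apply Rlt_le, Rinv_0_lt_compat, lt_0_INR, Factorial.lt_O_fact. Qed.

Lemma bb_mono N Bd L k s t : 0 <= Bd -> 0 <= L -> 0 <= s <= t -> bb N Bd L k s <= bb N Bd L k t.
Proof. intros. unfold bb. apply Rmult_le_compat_l. unfold cst. apply Rmult_le_pos.
 apply Rmult_le_pos; auto. apply pow_le. apply Rmult_le_pos; auto; apply pos_INR.
 apply Rlt_le, Rinv_0_lt_compat, lt_0_INR, Factorial.lt_O_fact. apply pow_incr; lra. Qed.

Lemma ex_bb N Bd L t : 0 <= Bd -> 0 <= L -> 0 <= t -> ex_series (fun k => bb N Bd L k t).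
Proof. intros HB HL Ht.
 set (x := INR N * L * t).
 assert (E : ex_series (fun n => scal (pow_n x n) (/ INR (Factorial.fact n)))) by (eexists; apply is_exp_Reals).
 apply (ex_series_scal_l (Bd * t)) in E.
 { apply (@ex_series_le R_AbsRing R_CompleteNormedModule _ (fun n : nat => scal (Bd * t) (scal (pow_n x n) (/ INR (Factorial.fact n))))); auto.
     intros n. change (norm (bb N Bd L n t)) with (Rabs (bb N Bd L n t)).
     rewrite Rabs_right by (apply Rle_ge, bb_nonneg; auto).
     change (scal (Bd * t) (scal (pow_n x n) (/ INR (Factorial.fact n)))) with (Bd * t * (pow_n x n * / INR (Factorial.fact n))).
     rewrite pow_n_pow. unfold bb, cst, x. rewrite !Rpow_mult_distr. simpl pow at 2.
     assert (Hf : / INR (Factorial.fact (S n)) <= / INR (Factorial.fact n)).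
     { apply Rinv_le_contravar. apply lt_0_INR, Factorial.lt_O_fact. apply le_INR, Factorial.fact_le. lia. }
     assert (0 <= Bd * ((INR N ^ n * L ^ n) * (t ^ n * t))).
     { apply Rmult_le_pos; auto. apply Rmult_le_pos; apply Rmult_le_pos; auto; apply pow_le; auto. apply pos_INR. }
     unfold Rdiv. rewrite <- tech_pow_Rmult.
     replace (Bd * (INR N ^ n * L ^ n) * / INR (Factorial.fact (S n)) * (t * t ^ n)) with
       ((Bd * ((INR N ^ n * L ^ n) * (t ^ n * t))) * / INR (Factorial.fact (S n))) by ring.
     replace (Bd * t * (INR N ^ n * L ^ n * t ^ n * / INR (Factorial.fact n))) with
       ((Bd * ((INR N ^ n * L ^ n) * (t ^ n * t))) * / INR (Factorial.fact n)) by ring.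
     apply Rmult_le_compat_l; auto. } Qed.

Definition Dl G x0 t i k := pit G x0 (S k) t i - pit G x0 k t i.
Definition xsol G x0 t i := x0 i + Series (Dl G x0 (Rmax 0 t) i).

Lemma sum_Dl G x0 t i k : sum_n (Dl G x0 t i) k = pit G x0 (S k) t i - x0 i.
Proof. induction k. rewrite sum_O. unfold Dl. simpl (pit G x0 0 t i). auto.
 rewrite sum_Sn. change (plus (sum_n (Dl G x0 t i) k) (Dl G x0 t i (S k))) with (sum_n (Dl G x0 t i) k + Dl G x0 t i (S k)).
 rewrite IHk. unfold Dl. assert (Hr : forall a b c : R, (b - a) + (c - b) = c - a) by (intros; ring). apply Hr. Qed.

Lemma ex_Dl N G Bd L x0 t i : 0 <= Bd -> 0 <= L -> GB N G Bd -> GL N G L -> 0 <= t -> (i < N)%nat ->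
  ex_series (Dl G x0 t i).
Proof. intros. apply (@ex_series_le R_AbsRing R_CompleteNormedModule _ (fun k => bb N Bd L k t)).
 intros n. change (norm (Dl G x0 t i n)) with (Rabs (Dl G x0 t i n)). apply (pit_bound N G Bd L); auto.
 apply ex_bb; auto. Qed.

Lemma Rmax0 t : 0 <= t -> Rmax 0 t = t.
Proof. intros; apply Rmax_right; auto. Qed.

Lemma lim_pit N G Bd L x0 t i : 0 <= Bd -> 0 <= L -> GB N G Bd -> GL N G L -> (i < N)%nat ->
  is_lim_seq (fun k => pit G x0 (S k) (Rmax 0 t) i) (xsol G x0 t i).
Proof. intros. assert (Ht : 0 <= Rmax 0 t) by apply Rmax_l.
 assert (E := Series_correct _ (ex_Dl N G Bd L x0 (Rmax 0 t) i H H0 H1 H2 Ht H3)).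
 assert (E2 : is_lim_seq (sum_n (Dl G x0 (Rmax 0 t) i)) (Series (Dl G x0 (Rmax 0 t) i))) by exact E.
 apply (is_lim_seq_plus' (fun _ => x0 i) _ (x0 i)) in E2; [|apply is_lim_seq_const].
 unfold xsol. eapply is_lim_seq_ext; [|exact E2]. intros n. cbv beta. rewrite sum_Dl. assert (Hr : forall a b : R, a + (b - a) = b) by (intros; ring). apply Hr. Qed.

Lemma pit0 G x0 k i : pit G x0 k 0 i = x0 i.
Proof. destruct k; simpl; auto. rewrite RInt_point. apply Rplus_0_r. Qed.

Lemma sum_n_zero n : sum_n (fun _ : nat => 0) n = 0.
Proof. induction n. rewrite sum_O; auto. rewrite sum_Sn, IHn. apply Rplus_0_r. Qed.

Lemma is_series_zero : is_series (fun _ : nat => 0) 0.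
Proof. unfold is_series. apply (filterlim_ext (fun _ => 0)). intros n; rewrite sum_n_zero; auto.
 apply filterlim_const. Qed.

Lemma xsol0 G x0 i : xsol G x0 0 i = x0 i.
Proof. unfold xsol. rewrite Rmax0 by lra.
 rewrite (Series_ext _ (fun _ => 0)). 2:{ intros n. unfold Dl. rewrite !pit0. apply Rminus_diag. }
 rewrite (is_series_unique (fun _ : nat => 0) 0). ring.
 apply is_series_zero. Qed.

Lemma lim_shift (u : nat -> R) l k : is_lim_seq u l -> is_lim_seq (fun m => u (m + k)%nat) l.
Proof. intros H. apply (is_lim_seq_incr_n u k l). auto. Qed.

Lemma tail N G Bd L x0 s t i k : 0 <= Bd -> 0 <= L -> GB N G Bd -> GL N G L -> 0 <= s <= t -> (i < N)%nat ->
  Rabs (xsol G x0 s i - pit G x0 (S k) s i) <= Series (fun m => bb N Bd L m t) - sum_n (fun m => bb N Bd L m t) k.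
Proof. intros HBd HL HB HG Hs Hi.
 assert (Ht : 0 <= t) by lra.
 unfold xsol. rewrite Rmax0 by lra.
 replace (pit G x0 (S k) s i) with (x0 i + sum_n (Dl G x0 s i) k) by (rewrite sum_Dl; ring).
 replace (x0 i + Series (Dl G x0 s i) - (x0 i + sum_n (Dl G x0 s i) k)) with (Series (Dl G x0 s i) - sum_n (Dl G x0 s i) k) by ring.
 assert (Hm : forall m, Rabs (sum_n (Dl G x0 s i) (m + k) - sum_n (Dl G x0 s i) k) <=
                       sum_n (fun m => bb N Bd L m t) (m + k) - sum_n (fun m => bb N Bd L m t) k).
 { induction m. simpl. rewrite Rminus_diag, Rabs_R0. lra.
   replace (S m + k)%nat with (S (m + k)) by lia. rewrite !sum_Sn.
   change (plus (sum_n (Dl G x0 s i) (m + k)) (Dl G x0 s i (S (m + k)))) with (sum_n (Dl G x0 s i) (m + k) + Dl G x0 s i (S (m + k))).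
   change (plus (sum_n (fun m0 : nat => bb N Bd L m0 t) (m + k)) (bb N Bd L (S (m + k)) t)) with
     (sum_n (fun m0 : nat => bb N Bd L m0 t) (m + k) + bb N Bd L (S (m + k)) t).
   assert (Rabs (Dl G x0 s i (S (m + k))) <= bb N Bd L (S (m + k)) t).
   { eapply Rle_trans. apply (pit_bound N G Bd L); auto; lra. apply bb_mono; auto; lra. }
   replace (sum_n (Dl G x0 s i) (m + k) + Dl G x0 s i (S (m + k)) - sum_n (Dl G x0 s i) k) with
     ((sum_n (Dl G x0 s i) (m + k) - sum_n (Dl G x0 s i) k) + Dl G x0 s i (S (m + k))) by ring.
   eapply Rle_trans; [apply Rabs_triang|]. lra. }
 assert (L1 := Series_correct _ (ex_Dl N G Bd L x0 s i HBd HL HB HG ltac:(lra) Hi)).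
 assert (L2 := Series_correct _ (ex_bb N Bd L t HBd HL Ht)).
 assert (L1' : is_lim_seq (sum_n (Dl G x0 s i)) (Series (Dl G x0 s i))) by exact L1.
 assert (L2' : is_lim_seq (sum_n (fun m => bb N Bd L m t)) (Series (fun m => bb N Bd L m t))) by exact L2.
 apply (lim_shift _ _ k) in L1'. apply (lim_shift _ _ k) in L2'.
 apply (is_lim_seq_minus' _ (fun _ => sum_n (Dl G x0 s i) k) _ (sum_n (Dl G x0 s i) k)) in L1'; [|apply is_lim_seq_const].
 apply (is_lim_seq_minus' _ (fun _ => sum_n (fun m => bb N Bd L m t) k) _ (sum_n (fun m => bb N Bd L m t) k)) in L2'; [|apply is_lim_seq_const].
 apply is_lim_seq_abs in L1'.
 assert (Hle := is_lim_seq_le _ _ _ _ Hm L1' L2'). simpl in Hle. exact Hle. Qed.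

Lemma Rmax_lip a b : Rabs (Rmax 0 a - Rmax 0 b) <= Rabs (a - b).
Proof. unfold Rmax. destruct (Rle_dec 0 a), (Rle_dec 0 b); unfold Rabs; repeat destruct Rcase_abs; lra. Qed.

Lemma xsol_lip N G Bd L x0 i : 0 <= Bd -> 0 <= L -> GB N G Bd -> GL N G L -> (i < N)%nat ->
  forall a b, Rabs (xsol G x0 a i - xsol G x0 b i) <= Bd * Rabs (a - b).
Proof. intros HBd HL HB HG Hi a b.
 assert (La := lim_pit N G Bd L x0 a i HBd HL HB HG Hi).
 assert (Lb := lim_pit N G Bd L x0 b i HBd HL HB HG Hi).
 assert (Lab := is_lim_seq_abs _ _ (is_lim_seq_minus' _ _ _ _ La Lb)).
 assert (Hn : forall n, Rabs (pit G x0 (S n) (Rmax 0 a) i - pit G x0 (S n) (Rmax 0 b) i) <= Bd * Rabs (a - b)).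
 { intros n. eapply Rle_trans. apply (pit_lip N G Bd L); auto.
   apply Rmult_le_compat_l; auto. apply Rmax_lip. }
 assert (Hle := is_lim_seq_le _ (fun _ => Bd * Rabs (a - b)) _ _ Hn Lab (is_lim_seq_const _)).
 simpl in Hle. exact Hle. Qed.

Lemma xsol_gcont N G Bd L x0 i : 0 <= Bd -> 0 <= L -> GB N G Bd -> GL N G L -> (i < N)%nat ->
  forall s, continuous (fun s : R => G (xsol G x0 s) i) s.
Proof. intros HBd HL HB HG Hi s. apply (lip_cont _ (L * (INR N * Bd))).
 apply Rmult_le_pos; auto. apply Rmult_le_pos; auto. apply pos_INR.
 apply comp_lip; auto. intros j Hj. apply (xsol_lip N G Bd L); auto. Qed.

Lemma xsol_int N G Bd L x0 t i : 0 <= Bd -> 0 <= L -> GB N G Bd -> GL N G L -> 0 <= t -> (i < N)%nat ->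
  xsol G x0 t i = x0 i + RInt (fun s => G (xsol G x0 s) i) 0 t.
Proof. intros HBd HL HB HG Ht Hi.
 set (gx := fun s : R => G (xsol G x0 s) i).
 assert (Cx : forall s, continuous gx s) by (apply (xsol_gcont N G Bd L); auto).
 set (tau := fun k => Series (fun m => bb N Bd L m t) - sum_n (fun m => bb N Bd L m t) k).
 assert (Hb : forall k, Rabs (RInt gx 0 t - RInt (fun s => G (pit G x0 (S k) s) i) 0 t) <= t * (L * (INR N * tau k))).
 { intros k. assert (Ck : forall s, continuous (fun s => G (pit G x0 (S k) s) i) s) by (apply (pit_gcont N G Bd L); auto).
   rewrite <- RInt_minusR by auto.
   replace t with (t - 0) at 2 by ring. apply abs_RInt_le_const; auto.
   apply exR. intros s. apply (@continuous_minus _ R_AbsRing R_NormedModule); auto.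
   intros s Hs. unfold gx. eapply Rle_trans. apply HG; auto. apply Rmult_le_compat_l; auto.
   rewrite <- su_const. apply su_le. intros j Hj. apply (tail N G Bd L); auto. }
 assert (Ltau : is_lim_seq tau 0).
 { assert (L2 := Series_correct _ (ex_bb N Bd L t HBd HL Ht)).
   assert (L2' : is_lim_seq (sum_n (fun m => bb N Bd L m t)) (Series (fun m => bb N Bd L m t))) by exact L2.
   apply (is_lim_seq_minus' (fun _ => Series (fun m => bb N Bd L m t)) _ (Series (fun m => bb N Bd L m t))) in L2'; [|apply is_lim_seq_const].
   rewrite Rminus_diag in L2'. exact L2'. }
 assert (Lc : is_lim_seq (fun k => t * (L * (INR N * tau k))) 0).
 { apply (is_lim_seq_ext (fun k => (t * L * INR N) * tau k)). intros; ring.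
   replace (Finite 0) with (Rbar_mult (t * L * INR N) 0) by (simpl; f_equal; ring).
   apply is_lim_seq_scal_l. auto. }
 assert (Lr : is_lim_seq (fun k => x0 i + RInt (fun s => G (pit G x0 (S k) s) i) 0 t) (x0 i + RInt gx 0 t)).
 { apply (is_lim_seq_plus' (fun _ => x0 i)). apply is_lim_seq_const.
   apply (is_lim_seq_le_le (fun k => RInt gx 0 t - t * (L * (INR N * tau k))) _ (fun k => RInt gx 0 t + t * (L * (INR N * tau k)))).
   - intros k. specialize (Hb k). apply Rabs_le_between' in Hb. lra.
   - replace (Finite (RInt gx 0 t)) with (Finite (RInt gx 0 t - 0)) by (f_equal; ring).
     apply is_lim_seq_minus'; auto. apply is_lim_seq_const.
   - replace (Finite (RInt gx 0 t)) with (Finite (RInt gx 0 t + 0)) by (f_equal; ring).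
     apply is_lim_seq_plus'; auto. apply is_lim_seq_const. }
 assert (Lp := lim_pit N G Bd L x0 t i HBd HL HB HG Hi).
 apply is_lim_seq_incr_1 in Lp. rewrite Rmax0 in Lp by auto.
 assert (E1 := is_lim_seq_unique _ _ Lp). assert (E2 := is_lim_seq_unique _ _ Lr).
 change (Lim_seq (fun n => pit G x0 (S (S n)) t i)) with (Lim_seq (fun k => x0 i + RInt (fun s => G (pit G x0 (S k) s) i) 0 t)) in E1.
 rewrite E2 in E1. injection E1. intros; auto. Qed.

Lemma xsol_deriv N G Bd L x0 t i : 0 <= Bd -> 0 <= L -> GB N G Bd -> GL N G L -> 0 < t -> (i < N)%nat ->
  is_derive (fun s => xsol G x0 s i) t (G (xsol G x0 t) i).
Proof. intros HBd HL HB HG Ht Hi.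
 set (gx := fun s : R => G (xsol G x0 s) i).
 assert (Cx : forall s, continuous gx s) by (apply (xsol_gcont N G Bd L); auto).
 apply (is_derive_ext_loc (fun s => x0 i + RInt gx 0 s)).
 - exists (mkposreal t Ht). intros s Hs. change (Rabs (s - t) < t) in Hs.
   symmetry. apply (xsol_int N G Bd L); auto. apply Rabs_lt_between' in Hs. lra.
 - replace (G (xsol G x0 t) i) with (plus zero (gx t)) by (rewrite plus_zero_l; auto).
   apply (is_derive_plus (fun _ => x0 i) (fun s => RInt gx 0 s)). apply (@is_derive_const R_AbsRing R_NormedModule).
   apply (is_derive_RInt gx (fun s => RInt gx 0 s) 0 t); auto. apply filter_forall. intros b. apply (@RInt_correct R_CompleteNormedModule). apply exR; auto. Qed.

Lemma rlt_le x y (T : Rbar) : x <= y -> Rbar_lt y T -> Rbar_lt x T.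
Proof. destruct T; simpl; auto; lra. Qed.

Lemma mono_right (g dg : R -> R) (T : Rbar) :
  filterlim g (at_right 0) (locally (g 0)) ->
  (forall t, 0 < t -> Rbar_lt t T -> is_derive g t (dg t)) ->
  (forall t, 0 < t -> Rbar_lt t T -> dg t <= 0) ->
  forall t, 0 <= t -> Rbar_lt t T -> g t <= g 0.
Proof. intros Hc Hd Hn t Ht HT. destruct (Req_dec t 0) as [->|Ht0]; [lra|].
 assert (Hle : forall e, 0 < e < t -> g t <= g e).
 { intros e He. destruct (MVT_gen g e t dg) as [c [Hc1 Hc2]].
   - intros x Hx. rewrite Rmin_left, Rmax_right in Hx by lra. apply Hd. lra. apply (rlt_le x t); auto; lra.
   - intros x Hx. rewrite Rmin_left, Rmax_right in Hx by lra. apply continuity_pt_filterlim.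
     apply (@ex_derive_continuous R_AbsRing R_NormedModule). exists (dg x). apply Hd. lra. apply (rlt_le x t); auto; lra.
   - rewrite Rmin_left, Rmax_right in Hc1 by lra.
     assert (dg c <= 0) by (apply Hn; [lra| apply (rlt_le c t); auto; lra]). nra. }
 destruct (Rle_dec (g t) (g 0)) as [|Hgt]; auto. exfalso.
 assert (Heta : 0 < g t - g 0) by lra.
 assert (Hb := Hc (ball (g 0) (mkposreal _ Heta)) (locally_ball _ _)).
 destruct Hb as [d Hd']. set (e := Rmin (d / 2) (t / 2)).
 assert (He : 0 < e). { unfold e. apply Rmin_glb_lt; pose proof (cond_pos d); lra. }
 assert (He2 : e <= t / 2) by apply Rmin_r. assert (He3 : e <= d / 2) by apply Rmin_l.
 assert (Hb : ball (g 0) (mkposreal _ Heta) (g e)).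
 { apply Hd'; auto. change (Rabs (e - 0) < d). rewrite Rminus_0_r, Rabs_right by lra. pose proof (cond_pos d). lra. }
 change (Rabs (g e - g 0) < g t - g 0) in Hb. apply Rabs_lt_between' in Hb.
 assert (g t <= g e) by (apply Hle; lra). lra. Qed.

Lemma fl_plus (f g : R -> R) F {FF : Filter F} a b : filterlim f F (locally a) -> filterlim g F (locally b) ->
  filterlim (fun t => f t + g t) F (locally (a + b)).
Proof. intros Hf Hg. apply (filterlim_comp_2 f g Rplus Hf Hg). apply (@filterlim_plus R_AbsRing R_NormedModule). Qed.
Lemma fl_mult (f g : R -> R) F {FF : Filter F} a b : filterlim f F (locally a) -> filterlim g F (locally b) ->
  filterlim (fun t => f t * g t) F (locally (a * b)).
Proof. intros Hf Hg. apply (filterlim_comp_2 f g Rmult Hf Hg). apply (@filterlim_mult R_AbsRing). Qed.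

Definition Wf (N : nat) (qs : R) (x : R -> nat -> R) (t : R) : R :=
  sum_upto N (fun i => (x t i - qs) ^ 2).

Lemma Wf_rc N qs (x : R -> nat -> R) :
  (forall i, (i < N)%nat -> filterlim (fun s => x s i) (at_right 0) (locally (x 0 i))) ->
  filterlim (Wf N qs x) (at_right 0) (locally (Wf N qs x 0)).
Proof. intros H. unfold Wf. induction N; simpl.
 - apply filterlim_const.
 - assert (FF : Filter (at_right 0)) by exact _.
   apply (@fl_plus _ _ _ FF). apply IHN. intros; apply H; lia.
   replace ((x 0 N - qs) * ((x 0 N - qs) * 1)) with ((x 0 N + - qs) * ((x 0 N + - qs) * 1)) by ring.
   apply (@fl_mult (fun t => x t N + - qs) _ _ FF). apply (@fl_plus _ _ _ FF). apply H; lia. apply filterlim_const.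
   apply (@fl_mult _ _ _ FF). apply (@fl_plus _ _ _ FF). apply H; lia. apply filterlim_const. apply filterlim_const. Qed.

Lemma isd_eq (f : R -> R) x l l' : is_derive f x l -> l = l' -> is_derive f x l'.
Proof. intros H <-; auto. Qed.
Lemma isd_plus (f g : R -> R) x a b : is_derive f x a -> is_derive g x b -> is_derive (fun s => f s + g s) x (a + b).
Proof. intros. apply (is_derive_plus f g x a b); auto. Qed.
Lemma isd_mult (f g : R -> R) x a b : is_derive f x a -> is_derive g x b -> is_derive (fun s => f s * g s) x (a * g x + f x * b).
Proof. intros. apply (is_derive_mult f g x a b); auto. intros; apply Rmult_comm. Qed.
Lemma isd_const (c x : R) : is_derive (fun _ => c) x 0.
Proof. apply (@is_derive_const R_AbsRing R_NormedModule). Qed.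
Lemma isd_minc (f : R -> R) x a c : is_derive f x a -> is_derive (fun s => f s - c) x a.
Proof. intros H. assert (E : a + 0 = a) by ring. rewrite <- E. apply (isd_plus f (fun _ => - c)); auto. apply isd_const. Qed.

Lemma Wf_deriv N qs (x : R -> nat -> R) (d : nat -> R) t :
  (forall i, (i < N)%nat -> is_derive (fun s => x s i) t (d i)) ->
  is_derive (Wf N qs x) t (2 * sum_upto N (fun i => (x t i - qs) * d i)).
Proof. intros H. unfold Wf. induction N.
 - simpl. assert (E : 0 = 2 * 0) by ring. rewrite <- E. apply isd_const.
 - cbn [sum_upto].
   assert (E : 2 * sum_upto N (fun i => (x t i - qs) * d i) + 2 * ((x t N - qs) * d N) = 2 * (sum_upto N (fun i => (x t i - qs) * d i) + (x t N - qs) * d N)) by ring.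
   rewrite <- E.
   apply isd_plus. apply IHN. intros; apply H; lia.
   assert (E2 : d N * ((x t N - qs) * 1) + (x t N - qs) * (d N * 1 + (x t N - qs) * 0) = 2 * ((x t N - qs) * d N)) by ring.
   rewrite <- E2.
   apply (isd_mult (fun s => x s N - qs) (fun s => (x s N - qs) * 1)). apply isd_minc; apply H; lia.
   apply (isd_mult (fun s => x s N - qs) (fun _ => 1)). apply isd_minc; apply H; lia. apply isd_const. Qed.

Definition rr (qs : R) := Rmin qs (1 - qs) / 2.
Definition clampv (qs v : R) := Rmax (qs - rr qs) (Rmin (qs + rr qs) v).
Definition cl (qs : R) (q : nat -> R) : nat -> R := fun k => clampv qs (q k).
Definition Gc N C A M qs (q : nat -> R) (i : nat) := Fexp N C A M (cl qs q) i.

Lemma rr_facts qs : 0 < qs < 1 -> 0 < rr qs /\ rr qs <= qs / 2 /\ rr qs <= (1 - qs) / 2.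
Proof. intros H. unfold rr. pose proof (Rmin_l qs (1 - qs)). pose proof (Rmin_r qs (1 - qs)).
 assert (0 < Rmin qs (1 - qs)) by (apply Rmin_glb_lt; lra). lra. Qed.

Lemma clamp_range qs v : 0 < qs < 1 -> qs - rr qs <= clampv qs v <= qs + rr qs.
Proof. intros H. destruct (rr_facts qs H) as [H1 _]. unfold clampv.
 pose proof (Rmax_l (qs - rr qs) (Rmin (qs + rr qs) v)). split; auto.
 apply Rmax_lub; [lra|apply Rmin_l]. Qed.

Lemma clamp_lip qs a b : Rabs (clampv qs a - clampv qs b) <= Rabs (a - b).
Proof. unfold clampv, Rmax, Rmin. repeat destruct Rle_dec; unfold Rabs; repeat destruct Rcase_abs; lra. Qed.

Lemma clamp_id qs v : Rabs (v - qs) <= rr qs -> clampv qs v = v.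
Proof. intros H. apply Rabs_le_between' in H. unfold clampv, Rmax, Rmin. repeat destruct Rle_dec; lra. Qed.

Lemma cl_box N qs q : 0 < qs < 1 -> in_box N (cl qs q).
Proof. intros H k _. unfold cl. destruct (clamp_range qs (q k) H). destruct (rr_facts qs H) as [? [? ?]]. lra. Qed.

Lemma Fexp_ext N C A M p q i : (i < N)%nat -> (forall k, (k < N)%nat -> p k = q k) -> Fexp N C A M p i = Fexp N C A M q i.
Proof. intros Hi H. unfold Fexp, Dd, alpha, beta. rewrite H by auto.
 f_equal. f_equal. apply su_ext. intros j Hj. destruct (Nat.eqb j i); auto.
 f_equal; apply prod_ext; intros k Hk; rewrite H by auto; auto. Qed.

Lemma term_le_sum N f i : (i < N)%nat -> (forall k, (k < N)%nat -> 0 <= f k) -> f i <= sum_upto N f.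
Proof. intros Hi H. assert (E := su_skip N i f Hi).
 assert (0 <= sum_upto N (fun k => if Nat.eqb k i then 0 else f k)).
 { apply su_nonneg. intros k Hk. destruct (Nat.eqb k i); [lra|auto]. } lra. Qed.

Lemma Dd_range N p i : (2 <= N)%nat -> (i < N)%nat -> in01 N p -> 0 <= Dd N p i <= INR N - 1.
Proof. intros HN Hi H. unfold Dd. split.
 - apply su_nonneg. intros k Hk. destruct (Nat.eqb k i); [lra|]. apply Rmult_le_pos; [apply alpha01|apply beta01]; auto.
 - rewrite <- (Rmult_1_r (INR N - 1)). rewrite <- (su_skip_const N i) by auto. apply su_le. intros k Hk. destruct (Nat.eqb k i); [lra|].
   destruct (alpha01 N p i H). destruct (beta01 N p i k H). replace 1 with (1 * 1) by ring. apply Rmult_le_compat; auto. Qed.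

Lemma Gc_GB N C A M qs : (2 <= N)%nat -> 0 < C -> 0 < M -> 0 <= A -> 0 < qs < 1 ->
  GB N (Gc N C A M qs) (C / (qs - rr qs) + M + A).
Proof. intros HN HC HM HA Hq q i Hi. unfold Gc, Fexp.
 destruct (rr_facts qs Hq) as [R1 [R2 R3]].
 assert (HN1 : 1 <= INR N - 1). { apply le_INR in HN. simpl in HN. lra. }
 set (c := cl qs q). assert (Hc : in01 N c). { unfold in01; intros k Hk. pose proof (cl_box N qs q Hq k Hk). unfold c; lra. }
 destruct (Dd_range N c i HN Hi Hc) as [D1 D2].
 destruct (clamp_range qs (q i) Hq) as [C1 C2]. change (clampv qs (q i)) with (c i) in C1, C2.
 assert (0 < C / c i) by (apply Rdiv_lt_0_compat; lra).
 assert (C / c i <= C / (qs - rr qs)). { unfold Rdiv. apply Rmult_le_compat_l; [lra|]. apply Rinv_le_contravar; lra. }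
 assert (0 <= A / (INR N - 1) * Dd N c i) by (apply Rmult_le_pos; auto; apply Rdiv_le_0_compat; lra).
 assert (A / (INR N - 1) * Dd N c i <= A).
 { replace A with (A / (INR N - 1) * (INR N - 1)) at 2 by (field; lra). apply Rmult_le_compat_l; auto. apply Rdiv_le_0_compat; lra. }
 unfold Rabs. destruct Rcase_abs; lra. Qed.

Lemma Sk_le_full N p p' i : Sk N p p' i <= sum_upto N (fun k => Rabs (p k - p' k)).
Proof. unfold Sk. apply su_le. intros k _. destruct (Nat.eqb k i); [apply Rabs_pos|lra]. Qed.

Lemma Gc_GL N C A M qs : (2 <= N)%nat -> 0 < C -> 0 <= A -> 0 < qs < 1 ->
  GL N (Gc N C A M qs) (C / (qs - rr qs) ^ 2 + 2 * A).
Proof. intros HN HC HA Hq q p i Hi. unfold Gc, Fexp.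
 destruct (rr_facts qs Hq) as [R1 [R2 R3]].
 assert (HN1 : 1 <= INR N - 1). { apply le_INR in HN. simpl in HN. lra. }
 set (c := cl qs q). set (c' := cl qs p).
 assert (Hc : in01 N c). { unfold in01; intros k Hk. pose proof (cl_box N qs q Hq k Hk). unfold c; lra. }
 assert (Hc' : in01 N c'). { unfold in01; intros k Hk. pose proof (cl_box N qs p Hq k Hk). unfold c'; lra. }
 set (S := sum_upto N (fun k => Rabs (q k - p k))).
 assert (HS : sum_upto N (fun k => Rabs (c k - c' k)) <= S).
 { apply su_le. intros k _. apply clamp_lip. }
 assert (Hi1 : Rabs (c i - c' i) <= S).
 { eapply Rle_trans; [|exact HS]. apply (term_le_sum N (fun k => Rabs (c k - c' k))); auto. intros; apply Rabs_pos. }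
 assert (HD := Dd_lip N c c' i Hi Hc Hc'). assert (HSk := Sk_le_full N c c' i).
 destruct (clamp_range qs (q i) Hq) as [C1 C2]. change (clampv qs (q i)) with (c i) in C1, C2.
 destruct (clamp_range qs (p i) Hq) as [C3 C4]. change (clampv qs (p i)) with (c' i) in C3, C4.
 replace (C / c i - M - A / (INR N - 1) * Dd N c i - (C / c' i - M - A / (INR N - 1) * Dd N c' i))
   with (C * (c' i - c i) / (c i * c' i) - A / (INR N - 1) * (Dd N c i - Dd N c' i)) by (field; repeat split; lra).
 eapply Rle_trans; [apply Rabs_triang|]. rewrite Rabs_Ropp.
 assert (T1 : Rabs (C * (c' i - c i) / (c i * c' i)) <= C / (qs - rr qs) ^ 2 * S).
 { unfold Rdiv. rewrite !Rabs_mult. rewrite (Rabs_right C) by lra.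
   rewrite (Rabs_right (/ (c i * c' i))) by (apply Rle_ge, Rlt_le, Rinv_0_lt_compat; nra).
   rewrite <- Rabs_Ropp. replace (- (c' i - c i)) with (c i - c' i) by ring.
   assert (/ (c i * c' i) <= / (qs - rr qs) ^ 2) by (apply Rinv_le_contravar; nra).
   assert (0 <= / (c i * c' i)) by (apply Rlt_le, Rinv_0_lt_compat; nra).
   assert (0 <= Rabs (c i - c' i)) by apply Rabs_pos.
   replace (C * Rabs (c i - c' i) * / (c i * c' i)) with (C * (Rabs (c i - c' i) * / (c i * c' i))) by ring.
   replace (C * / (qs - rr qs) ^ 2 * S) with (C * (S * / (qs - rr qs) ^ 2)) by ring.
   apply Rmult_le_compat_l; [lra|]. apply Rmult_le_compat; auto. }
 assert (T2 : Rabs (A / (INR N - 1) * (Dd N c i - Dd N c' i)) <= 2 * A * S).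
 { rewrite Rabs_mult. rewrite Rabs_right by (apply Rle_ge, Rdiv_le_0_compat; lra).
   assert (0 <= A / (INR N - 1)) by (apply Rdiv_le_0_compat; lra).
   eapply Rle_trans. apply Rmult_le_compat_l; [auto|exact HD].
   replace (A / (INR N - 1) * (2 * (INR N - 1) * Sk N c c' i)) with (2 * A * Sk N c c' i) by (field; lra).
   apply Rmult_le_compat_l; lra. }
 lra. Qed.

Lemma c0_pos N C A qs : 0 < C -> 0 < qs < 1 -> C > 2 * (INR N - 1) * A -> 0 < C / qs - 2 * A * (INR N - 1).
Proof. intros HC Hq H. assert (C <= C / qs).
 { unfold Rdiv. rewrite <- (Rmult_1_r C) at 1. apply Rmult_le_compat_l; [lra|].
   rewrite <- Rinv_1. apply Rinv_le_contravar; lra. } lra. Qed.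

Lemma clamp_cases qs v : 0 < qs < 1 ->
  (Rabs (v - qs) <= rr qs /\ clampv qs v = v) \/ (qs + rr qs < v /\ clampv qs v = qs + rr qs) \/
  (v < qs - rr qs /\ clampv qs v = qs - rr qs).
Proof. intros H. destruct (rr_facts qs H) as [R1 _]. unfold clampv.
 destruct (Rlt_le_dec (qs + rr qs) v).
 - right; left. split; auto. rewrite Rmin_left by lra. apply Rmax_right; lra.
 - destruct (Rlt_le_dec v (qs - rr qs)).
   + right; right. split; auto. rewrite Rmin_right by lra. apply Rmax_left; lra.
   + left. split. apply Rabs_le; lra. rewrite Rmin_right by lra. apply Rmax_right; lra. Qed.

Lemma clamp_dissip N C A M qs q : (2 <= N)%nat -> 0 < C -> 0 <= A -> 0 < qs < 1 ->
  is_Nash N C A M (sym_profile qs) -> C > 2 * (INR N - 1) * A ->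
  sum_upto N (fun i => (q i - qs) * Gc N C A M qs q i) <= 0.
Proof. intros HN HC HA Hq Hnash Hgt.
 assert (Hc0 := c0_pos N C A qs HC Hq Hgt).
 destruct (rr_facts qs Hq) as [R1 [R2 R3]].
 set (c := cl qs q). unfold Gc. fold c.
 assert (Hbox : in_box N c) by apply cl_box, Hq.
 assert (HT := total_bound N C A M qs c HN HC HA Hq Hnash Hbox).
 assert (0 <= sum_upto N (fun i => (c i - qs) ^ 2)) by (apply su_nonneg; intros; apply pow2_ge_0).
 assert (HT2 : sum_upto N (fun i => (c i - qs) * Fexp N C A M c i) <= 0).
 { eapply Rle_trans; [exact HT|]. nra. }
 eapply Rle_trans; [|exact HT2]. apply su_le. intros i Hi.
 assert (HSk : Sk N c (sym_profile qs) i <= (INR N - 1) * rr qs).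
 { unfold Sk. rewrite <- (su_skip_const N i) by auto. apply su_le. intros k Hk. destruct (Nat.eqb k i); [lra|].
   unfold c, cl, sym_profile. destruct (clamp_range qs (q k) Hq). apply Rabs_le; lra. }
 assert (HCB := coord_bound N C A M qs c i HN HC HA Hq Hi Hnash Hbox).
 set (F := Fexp N C A M c i) in *.
 assert (HB2 : 2 * A * Rabs (c i - qs) * Sk N c (sym_profile qs) i <= 2 * A * (INR N - 1) * rr qs ^ 2 * (Rabs (c i - qs) / rr qs)).
 { replace (2 * A * (INR N - 1) * rr qs ^ 2 * (Rabs (c i - qs) / rr qs)) with (2 * A * Rabs (c i - qs) * ((INR N - 1) * rr qs)) by (field; lra).
   apply Rmult_le_compat_l; auto. apply Rmult_le_pos; [lra|apply Rabs_pos]. }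
 destruct (clamp_cases qs (q i) Hq) as [[H1 H2]|[[H1 H2]|[H1 H2]]]; unfold c, cl in *; rewrite H2 in *.
 - lra.
 - replace (qs + rr qs - qs) with (rr qs) in * by ring. rewrite Rabs_right in HB2 by lra.
   replace (rr qs / rr qs) with 1 in HB2 by (field; lra).
   assert (rr qs * F < 0).
   { assert (0 < (C / qs - 2 * A * (INR N - 1)) * rr qs ^ 2) by (apply Rmult_lt_0_compat; auto; apply pow_lt; lra).
     rewrite Rabs_right in HCB by lra. nra. }
   assert (F < 0) by nra. nra.
 - replace (qs - rr qs - qs) with (- rr qs) in * by ring. rewrite Rabs_Ropp, Rabs_right in HB2 by lra.
   replace (rr qs / rr qs) with 1 in HB2 by (field; lra).
   assert (- rr qs * F < 0).
   { assert (0 < (C / qs - 2 * A * (INR N - 1)) * rr qs ^ 2) by (apply Rmult_lt_0_compat; auto; apply pow_lt; lra).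
     rewrite Rabs_Ropp, Rabs_right in HCB by lra. replace ((- rr qs) ^ 2) with (rr qs ^ 2) in HCB by ring. nra. }
   assert (0 < F) by nra. nra. Qed.

Lemma cont_right (f : R -> R) : continuous f 0 -> filterlim f (at_right 0) (locally (f 0)).
Proof. intros Hc P HP. unfold filtermap, at_right, within. apply (filter_imp (fun x => P (f x)) (fun x => 0 < x -> P (f x))). intros; auto. apply Hc; auto. Qed.

Lemma W_coord N qs (v : R -> nat -> R) t m i : 0 < m -> (i < N)%nat -> Wf N qs v t < m ^ 2 -> Rabs (v t i - qs) < m.
Proof. intros Hm Hi HW. assert (H := term_le_sum N (fun k => (v t k - qs) ^ 2) i Hi ltac:(intros; apply pow2_ge_0)).
 unfold Wf in HW. cbv beta in H. assert ((v t i - qs) ^ 2 < m ^ 2) by lra.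
 rewrite <- (pow2_abs (v t i - qs)) in H0. assert (0 <= Rabs (v t i - qs)) by apply Rabs_pos. nra. Qed.

Lemma W_small N qs (v : R -> nat -> R) d : (1 <= N)%nat -> 0 < d -> (forall i, (i < N)%nat -> Rabs (v 0 i - qs) < d) ->
  Wf N qs v 0 <= INR N * d ^ 2.
Proof. intros HN Hd H. unfold Wf. rewrite <- su_const. apply su_le. intros k Hk.
 specialize (H k Hk). rewrite <- (pow2_abs (v 0 k - qs)). assert (0 <= Rabs (v 0 k - qs)) by apply Rabs_pos. nra. Qed.

Lemma sol_W N C A M qs (x : R -> nat -> R) (T : Rbar) : (2 <= N)%nat -> 0 < C -> 0 <= A -> 0 < qs < 1 ->
  is_Nash N C A M (sym_profile qs) -> C > 2 * (INR N - 1) * A -> is_solution N (field N C A M) x T ->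
  forall t, 0 <= t -> Rbar_lt t T ->
  Wf N qs x t <= Wf N qs x 0 /\
  (0 < t -> is_derive (Wf N qs x) t (2 * sum_upto N (fun i => (x t i - qs) * field N C A M (x t) i)) /\
   2 * sum_upto N (fun i => (x t i - qs) * field N C A M (x t) i) <= - 2 * (C / qs - 2 * A * (INR N - 1)) * Wf N qs x t).
Proof. intros HN HC HA Hq Hnash Hgt [Hbox Hsol].
 assert (HD : forall t, 0 < t -> Rbar_lt t T ->
   is_derive (Wf N qs x) t (2 * sum_upto N (fun i => (x t i - qs) * field N C A M (x t) i)) /\
   2 * sum_upto N (fun i => (x t i - qs) * field N C A M (x t) i) <= - 2 * (C / qs - 2 * A * (INR N - 1)) * Wf N qs x t).
 { intros t Ht HT. split.
   - apply Wf_deriv. intros i Hi. apply (Hsol i Hi); auto.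
   - rewrite (su_ext N _ (fun i => (x t i - qs) * Fexp N C A M (x t) i)).
     + assert (H := total_bound N C A M qs (x t) HN HC HA Hq Hnash (Hbox t ltac:(lra) HT)). unfold Wf. lra.
     + intros i Hi. rewrite field_eq; auto. apply Hbox; auto; lra. }
 intros t Ht HT. split.
 - apply (mono_right _ (fun t => 2 * sum_upto N (fun i => (x t i - qs) * field N C A M (x t) i)) T); auto.
   + apply Wf_rc. intros i Hi; apply (Hsol i Hi).
   + intros s Hs HsT. apply HD; auto.
   + intros s Hs HsT. destruct (HD s Hs HsT) as [_ H]. assert (0 <= Wf N qs x s) by (apply su_nonneg; intros; apply pow2_ge_0).
     assert (0 < C / qs - 2 * A * (INR N - 1)) by (apply c0_pos; auto). nra.
 - intros Hpos. apply HD; auto. Qed.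

Lemma sol_decay N C A M qs (x : R -> nat -> R) : (2 <= N)%nat -> 0 < C -> 0 <= A -> 0 < qs < 1 ->
  is_Nash N C A M (sym_profile qs) -> C > 2 * (INR N - 1) * A -> is_solution N (field N C A M) x p_infty ->
  forall t, 0 <= t -> Wf N qs x t * exp (2 * (C / qs - 2 * A * (INR N - 1)) * t) <= Wf N qs x 0.
Proof. intros HN HC HA Hq Hnash Hgt Hs t Ht.
 set (c0 := C / qs - 2 * A * (INR N - 1)).
 assert (Hc0 : 0 < c0) by (apply c0_pos; auto).
 set (g := fun t => Wf N qs x t * exp (2 * c0 * t)).
 assert (E : g 0 = Wf N qs x 0) by (unfold g; rewrite Rmult_0_r, exp_0; ring).
 change (g t <= Wf N qs x 0). rewrite <- E.
 set (dW := fun t => 2 * sum_upto N (fun i => (x t i - qs) * field N C A M (x t) i)).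
 apply (mono_right g (fun t => dW t * exp (2 * c0 * t) + Wf N qs x t * (2 * c0 * exp (2 * c0 * t))) p_infty); auto.
 - unfold g. assert (FF : Filter (at_right 0)) by exact _. apply (@fl_mult _ _ _ FF).
   + apply Wf_rc. intros i Hi. apply (proj2 Hs i Hi).
   + replace (exp (2 * c0 * 0)) with ((fun t => exp (2 * c0 * t)) 0) by reflexivity. apply cont_right.
     apply (@ex_derive_continuous R_AbsRing R_NormedModule). auto_derive. auto.
 - intros s Hs0 _. unfold g. apply (isd_mult (Wf N qs x) (fun t => exp (2 * c0 * t))).
   + destruct (sol_W N C A M qs x p_infty HN HC HA Hq Hnash Hgt Hs s ltac:(lra) I) as [_ H]. apply H; auto.
   + auto_derive. auto. ring.
 - intros s Hs0 _. destruct (sol_W N C A M qs x p_infty HN HC HA Hq Hnash Hgt Hs s ltac:(lra) I) as [_ H].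
   destruct (H Hs0) as [_ H2]. fold c0 in H2. fold (dW s) in H2.
   assert (0 < exp (2 * c0 * s)) by apply exp_pos. nra. exact I. Qed.

Lemma clamped_solution N C A M qs x0 d : (2 <= N)%nat -> 0 < C -> 0 < M -> 0 <= A -> 0 < qs < 1 ->
  is_Nash N C A M (sym_profile qs) -> C > 2 * (INR N - 1) * A ->
  0 < d -> INR N * d ^ 2 < rr qs ^ 2 ->
  near_lt N x0 (sym_profile qs) d ->
  exists x, is_solution N (field N C A M) x p_infty /\ forall i, (i < N)%nat -> x 0 i = x0 i.
Proof. intros HN HC HM HA Hq Hnash Hgt Hd Hsmall Hx0.
 destruct (rr_facts qs Hq) as [R1 [R2 R3]].
 set (G := Gc N C A M qs). set (Bd := C / (qs - rr qs) + M + A). set (L := C / (qs - rr qs) ^ 2 + 2 * A).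
 assert (HBd : 0 <= Bd). { unfold Bd. assert (0 < C / (qs - rr qs)) by (apply Rdiv_lt_0_compat; lra). lra. }
 assert (HL : 0 <= L). { unfold L. assert (0 < C / (qs - rr qs) ^ 2) by (apply Rdiv_lt_0_compat; [lra|apply pow_lt; lra]). lra. }
 assert (HB : GB N G Bd) by (apply Gc_GB; auto).
 assert (HG : GL N G L) by (apply Gc_GL; auto).
 set (y := xsol G x0).
 assert (Hcont : forall i, (i < N)%nat -> forall s, continuous (fun t => y t i) s).
 { intros i Hi s. apply (lip_cont _ Bd); auto. apply (xsol_lip N G Bd L); auto. }
 assert (Hder : forall i, (i < N)%nat -> forall t, 0 < t -> is_derive (fun s => y s i) t (G (y t) i)).
 { intros i Hi t Ht. apply (xsol_deriv N G Bd L); auto. }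
 assert (HW : forall t, 0 <= t -> Wf N qs y t <= Wf N qs y 0).
 { intros t Ht. apply (mono_right _ (fun t => 2 * sum_upto N (fun i => (y t i - qs) * G (y t) i)) p_infty); auto.
   - apply Wf_rc. intros i Hi. apply cont_right. apply Hcont; auto.
   - intros s Hs _. apply Wf_deriv. intros i Hi. apply Hder; auto.
   - intros s _ _. assert (H := clamp_dissip N C A M qs (y s) HN HC HA Hq Hnash Hgt). fold G in H. lra. - exact I. }
 assert (HW0 : Wf N qs y 0 < rr qs ^ 2).
 { eapply Rle_lt_trans; [|exact Hsmall]. apply W_small; auto. lia. intros i Hi. unfold y. rewrite xsol0. apply Hx0; auto. }
 assert (Hclose : forall t, 0 <= t -> forall i, (i < N)%nat -> Rabs (y t i - qs) < rr qs).
 { intros t Ht i Hi. apply (W_coord N qs y t (rr qs) i); auto. specialize (HW t Ht). lra. }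
 assert (Hbox : forall t, 0 <= t -> in_box N (y t)).
 { intros t Ht k Hk. specialize (Hclose t Ht k Hk). apply Rabs_lt_between' in Hclose. lra. }
 exists y. split.
 - split.
   + intros t Ht _. apply Hbox; auto.
   + intros i Hi. split.
     * apply cont_right. apply Hcont; auto.
     * intros t Ht _. replace (field N C A M (y t) i) with (G (y t) i). apply Hder; auto.
       rewrite field_eq by (auto; apply Hbox; lra). unfold G, Gc. apply Fexp_ext; auto.
       intros k Hk. unfold cl. apply clamp_id. apply Rlt_le, Hclose; auto; lra.
 - intros i Hi. unfold y. apply xsol0. Qed.

Theorem proposition2 (N : nat) (C A M qs : R) :
  (2 <= N)%nat -> 0 < C -> 0 < M -> 0 <= A ->
  0 < qs < 1 ->
  is_Nash N C A M (sym_profile qs) ->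
  C > 2 * (INR N - 1) * A ->
  loc_asympt_stable N (field N C A M) (sym_profile qs).
Proof. intros HN HC HM HA Hq Hnash Hgt.
 destruct (rr_facts qs Hq) as [R1 [R2 R3]].
 assert (HNpos : 0 < INR N) by (apply lt_0_INR; lia).
 split.
 - intros eps Heps. set (m := Rmin eps (rr qs)).
   assert (Hm : 0 < m) by (apply Rmin_glb_lt; lra).
   assert (Hm1 : m <= eps) by apply Rmin_l. assert (Hm2 : m <= rr qs) by apply Rmin_r.
   set (d := m / (INR N + 1)).
   assert (Hd : 0 < d) by (apply Rdiv_lt_0_compat; lra).
   assert (Hsm : INR N * d ^ 2 < m ^ 2).
   { unfold d. replace (INR N * (m / (INR N + 1)) ^ 2) with (m ^ 2 * (INR N / (INR N + 1) ^ 2)) by (field; lra).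
     assert (INR N / (INR N + 1) ^ 2 < 1).
     { apply (Rmult_lt_reg_r ((INR N + 1) ^ 2)). nra. unfold Rdiv. rewrite Rmult_assoc, Rinv_l by nra. nra. }
     assert (0 < m ^ 2) by (apply pow_lt; lra). nra. }
   exists d. split; [auto|split].
   + intros x0 Hx0. apply (clamped_solution N C A M qs x0 d); auto.
     assert (m ^ 2 <= rr qs ^ 2) by (apply pow_incr; lra). lra.
   + intros T x Hs Hx0 t Ht HT i Hi. change (Rabs (x t i - qs) < eps).
     destruct (sol_W N C A M qs x T HN HC HA Hq Hnash Hgt Hs t Ht HT) as [HW _].
     assert (Wf N qs x 0 <= INR N * d ^ 2) by (apply W_small; auto; lia).
     assert (Rabs (x t i - qs) < m) by (apply (W_coord N qs x t m i); auto; lra). lra.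
 - exists 1. split; [lra|]. intros x Hs _ i Hi.
   set (c0 := C / qs - 2 * A * (INR N - 1)).
   assert (Hc0 : 0 < c0) by (apply c0_pos; auto).
   set (W0 := Wf N qs x 0).
   assert (HW0 : 0 <= W0) by (apply su_nonneg; intros; apply pow2_ge_0).
   intros P [eps HP]. simpl.
   exists (W0 / (eps * eps * (2 * c0))). intros t Ht.
   pose proof (cond_pos eps) as He.
   assert (Hq0 : 0 <= W0 / (eps * eps * (2 * c0))) by (apply Rdiv_le_0_compat; [auto|]; apply Rmult_lt_0_compat; nra).
   assert (Ht0 : 0 < t) by lra.
   apply HP. change (Rabs (x t i - qs) < eps).
   assert (Hdec := sol_decay N C A M qs x HN HC HA Hq Hnash Hgt Hs t ltac:(lra)). fold c0 W0 in Hdec.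
   assert (Hexp : 1 + 2 * c0 * t < exp (2 * c0 * t)) by (apply exp_ineq1; nra).
   assert (W0 < eps * eps * (2 * c0 * t)).
   { apply (Rmult_lt_reg_r (/ (eps * eps * (2 * c0)))). apply Rinv_0_lt_compat. apply Rmult_lt_0_compat; [apply Rmult_lt_0_compat|]; lra.
     replace (eps * eps * (2 * c0 * t) * / (eps * eps * (2 * c0))) with t by (field; split; lra). unfold Rdiv in Ht. lra. }
   assert (Wf N qs x t < eps ^ 2).
   { assert (0 <= Wf N qs x t) by (apply su_nonneg; intros; apply pow2_ge_0). 
     assert (Wf N qs x t * exp (2 * c0 * t) < eps ^ 2 * exp (2 * c0 * t)) by nra.
     apply (Rmult_lt_reg_r (exp (2 * c0 * t))); auto. apply exp_pos. }
   apply (W_coord N qs x t eps i); auto. Qed.
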